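(* For each $n$ let $p=p_n\in[0,1]$, let $X\sim\mathrm{Bin}(n,p)$ and $R = R_n = 1 + X + \frac{X(X-1)}{2}$. If $np\to\infty$ as $n\to\infty$, then $$\mathbb{V}(R) = n^3p^3(1-p)(1+o(1)) \quad (n\to\infty).$$
   Context: $\mathbb{V}$ denotes variance. $R$ is the number of regions formed when $n$ cuts are attempted on a pizza, each succeeding independently with probability $p$, with every successful cut meeting all prior successful cuts. *)

(* Defs.v *)
From HB Require Import structures.
From mathcomp Require Import all_boot all_order all_algebra.
From mathcomp Require Import all_classical all_reals all_analysis.
Set Implicit Arguments. Unset Strict Implicit. Unset Printing Implicit Defensive.
Import Order.TTheory GRing.Theory Num.Theory.
Local Open Scope ring_scope.

Definition binom_E (R : realType) (n : nat) (p : R) (f : nat -> R) : R :=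
  \sum_(k < n.+1) ('C(n, k))%:R * p ^+ k * (1 - p) ^+ (n - k) * f k.

Definition binom_var (R : realType) (n : nat) (p : R) (f : nat -> R) : R :=
  binom_E n p (fun k => f k ^+ 2) - (binom_E n p f) ^+ 2.

(* Number of pizza regions as a function of the number X of successful cuts:
   1 + X + X(X-1)/2. *)
Definition regions (R : realType) (x : nat) : R :=
  1 + x%:R + (x%:R * (x%:R - 1)) / 2.

(* Main.v *)
Require Import Defs.
From HB Require Import structures.
From mathcomp Require Import all_boot all_order all_algebra ring lra.
From mathcomp Require Import all_classical all_reals all_analysis.
Import Order.TTheory GRing.Theory Num.Theory.
Import numFieldNormedType.Exports.
Local Open Scope classical_set_scope.
Local Open Scope ring_scope.
Lemma binom_E_rec (R : realType) n (p : R) f :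
  binom_E n.+1 p f = p * binom_E n p (fun k => f k.+1) + (1 - p) * binom_E n p f.
Proof.
rewrite /binom_E big_ord_recl /=.
under eq_bigr => i _ do rewrite /bump leq0n add1n binS natrD !mulrDl.
rewrite big_split /= addrA addrC; congr (_ + _).
  rewrite mulr_sumr; apply: eq_bigr => i _; rewrite subSS exprS; ring.
rewrite big_ord_recr /= (bin_small (ltnSn n)) !mul0r addr0.
rewrite [in RHS]big_ord_recl /= mulrDr; congr (_ + _).
  by rewrite !bin0 !subn0 exprS; ring.
  rewrite mulr_sumr; apply: eq_bigr => i _; rewrite /bump leq0n add1n.
  have hi : (i < n)%N := ltn_ord i.
  rewrite (subSn hi) (exprS (1 - p)); ring.
Qed.
Lemma binom_E_ext (R : realType) n (p : R) f g : (forall k, f k = g k) ->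
  binom_E n p f = binom_E n p g.
Proof. by move=> fg; apply: eq_bigr => i _; rewrite fg. Qed.

Definition mom {R : realType} (N p a0 a1 a2 a3 a4 : R) : R :=
  a0 + a1 * (N * p) + a2 * (N * (N - 1) * p ^+ 2 + N * p)
  + a3 * (N * (N - 1) * (N - 2) * p ^+ 3 + 3 * (N * (N - 1)) * p ^+ 2 + N * p)
  + a4 * (N * (N - 1) * (N - 2) * (N - 3) * p ^+ 4 + 6 * (N * (N - 1) * (N - 2)) * p ^+ 3
          + 7 * (N * (N - 1)) * p ^+ 2 + N * p).

Lemma binom_mom (R : realType) (p : R) n (a0 a1 a2 a3 a4 : R) :
  binom_E n p (fun k => a0 + a1 * k%:R + a2 * k%:R ^+ 2 + a3 * k%:R ^+ 3 + a4 * k%:R ^+ 4)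
  = mom n%:R p a0 a1 a2 a3 a4.
Proof.
elim: n a0 a1 a2 a3 a4 => [|n IH] a0 a1 a2 a3 a4.
  rewrite /binom_E big_ord1 /mom /= bin0 !expr0; ring.
rewrite binom_E_rec.
rewrite (@binom_E_ext _ _ _ _ (fun k => (a0 + a1 + a2 + a3 + a4) + (a1 + 2 * a2 + 3 * a3 + 4 * a4) * k%:R
   + (a2 + 3 * a3 + 6 * a4) * k%:R ^+ 2 + (a3 + 4 * a4) * k%:R ^+ 3 + a4 * k%:R ^+ 4)); last first.
  by move=> k; rewrite -natr1; ring.
rewrite !IH /mom -natr1; ring.
Qed.

Lemma var_formula (R : realType) n (p : R) :
  binom_var n p (@regions R) = (n%:R * p) * (1 - p) *
    ((n%:R * p) ^+ 2 + 5 / 2 * (n%:R * p) * (1 - p) + (1 - p) * (2 - 3 * p) / 2).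
Proof.
rewrite /binom_var.
rewrite (@binom_E_ext _ _ _ (fun k => @regions R k ^+ 2)
  (fun k => 1 + 1 * k%:R + 5 / 4 * k%:R ^+ 2 + 1 / 2 * k%:R ^+ 3 + 1 / 4 * k%:R ^+ 4)); last first.
  by move=> k; rewrite /regions; field.
rewrite (@binom_E_ext _ _ _ (@regions R)
  (fun k => 1 + 1 / 2 * k%:R + 1 / 2 * k%:R ^+ 2 + 0 * k%:R ^+ 3 + 0 * k%:R ^+ 4)); last first.
  by move=> k; rewrite /regions; field.
by rewrite !binom_mom /mom; field.
Qed.

Theorem theorem3 (R : realType) (p : nat -> R)
  (hp : forall n, 0 <= p n <= 1)
  (hnp : (fun n : nat => n%:R * p n) @ \oo --> +oo) :
  exists eps : nat -> R, eps @ \oo --> 0 /\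
    \forall n \near \oo,
      binom_var n (p n) (@regions R) = (n%:R * p n) ^+ 3 * (1 - p n) * (1 + eps n).
Proof.
exists (fun n => (1 - p n) * (5 / 2 * (n%:R * p n)^-1 + (2 - 3 * p n) / 2 * ((n%:R * p n)^-1) ^+ 2)).
split; last first.
  apply: nearW => n; rewrite var_formula.
  case: (eqVneq (n%:R * p n) 0) => [->|xn0].
    by rewrite invr0; ring.
  by field; move: xn0; rewrite mulf_eq0 negb_or andbC.
have hx : \forall n \near \oo, 0 < n%:R * p n by move/cvgryPgt: hnp; apply.
have hy : (fun n => (n%:R * p n)^-1) @ \oo --> (0 : R).
  by apply/gtr0_cvgV0.
have hh : (fun n => 5 / 2 * (n%:R * p n)^-1 + (n%:R * p n)^-1 * (n%:R * p n)^-1) @ \oo --> (0 : R).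
  rewrite -[X in _ --> X](_ : 5 / 2 * 0 + 0 * 0 = (0 : R)); last by ring.
  apply: cvgD; last exact: cvgM.
  apply: cvgM => //; exact: cvg_cst.
set h := (fun n => 5 / 2 * (n%:R * p n)^-1 + (n%:R * p n)^-1 * (n%:R * p n)^-1) in hh.
apply: (@squeeze_cvgr _ _ _ _ (fun n => - h n) h); last exact: hh.
  2: by rewrite -oppr0; exact: (cvgN hh).
near=> n; rewrite /h.
have := hp n; have : 0 < (n%:R * p n)^-1 by rewrite invr_gt0; near: n.
move: ((n%:R * p n)^-1) => y y0 /andP[p0 p1].
have -> : (1 - p n) * (5 / 2 * y + (2 - 3 * p n) / 2 * y ^+ 2)
  = 5 / 2 * ((1 - p n) * y) + ((1 - p n) * (2 - 3 * p n) / 2) * (y * y) by ring.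
have c1 : -1 <= (1 - p n) * (2 - 3 * p n) / 2 <= 1 by apply/andP; split; nra.
move: c1; set c := (1 - p n) * (2 - 3 * p n) / 2; clearbody c; move=> /andP[c1 c2].
have yy : 0 < y * y by nra.
have py : 0 <= (1 - p n) * y <= y by apply/andP; split; nra.
move: py => /andP[py1 py2].
have cy1 : - (y * y) <= c * (y * y) by nra.
have cy2 : c * (y * y) <= y * y by nra.
apply/andP; split; lra.
Unshelve. all: end_near.
Qed.
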